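(* Let $D$ be a rooted hyperbolic digraph with constant out-degree and bounded in-degree. Then every elliptic self-embedding of $D$ is an automorphism of $D$.
   Context: A directed path $x_0\ldots x_n$ has edges $x_ix_{i+1}$; $d(x,y)$ is the length of a shortest directed $x$-$y$ path ($\infty$ if none), called an $x$-$y$ geodesic. $D$ is rooted if some vertex $o$ satisfies $d(o,v)<\infty$ for all $v$. $\mathcal{B}^+_k(x)=\{y:d(x,y)\le k\}$, $\mathcal{B}^-_k(x)=\{y:d(y,x)\le k\}$, extended to sets by unions. A geodesic triangle consists of three vertices and for each pair a geodesic between them (in one direction); it is $\delta$-thin if whenever $P,Q,R$ are its sides with the start of $P$ being the start or end of $Q$ and the end of $P$ being the start or end of $R$, $P\subseteq\mathcal{B}^+_\delta(Q)\cup\mathcal{B}^-_\delta(R)$; $D$ is hyperbolic if for some $\delta\ge0$ all geodesic triangles are $\delta$-thin. A self-embedding is an injective $g:V(D)\to V(D)$ with $xy\in E(D)\iff g(x)g(y)\in E(D)$; it is elliptic if $g(F)=F$ for some nonempty finite vertex set $F$. An automorphism is a bijective self-embedding. *)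

(* Defs.v *)
From Stdlib Require Import List Arith.
Import ListNotations.

Section Digraph.
Context {V : Type} (E : V -> V -> Prop).

Definition is_walk (f : nat -> V) (n : nat) : Prop :=
  forall i, i < n -> E (f i) (f (S i)).

Definition walk_len (x y : V) (n : nat) : Prop :=
  exists f, is_walk f n /\ f 0 = x /\ f n = y.

Definition dist_le (x y : V) (k : nat) : Prop :=
  exists n, n <= k /\ walk_len x y n.

Record dpath := DPath { plen : nat ; pfun : nat -> V }.

Definition pstart (P : dpath) : V := pfun P 0.
Definition pend (P : dpath) : V := pfun P (plen P).
Definition on_path (v : V) (P : dpath) : Prop :=
  exists i, i <= plen P /\ pfun P i = v.

Definition geodesic (x y : V) (P : dpath) : Prop :=
  is_walk (pfun P) (plen P) /\ pstart P = x /\ pend P = y /\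
  forall m, walk_len x y m -> plen P <= m.

Definition geodesic_between (a b : V) (P : dpath) : Prop :=
  geodesic a b P \/ geodesic b a P.

Definition geodesic_triangle (a b c : V) (P1 P2 P3 : dpath) : Prop :=
  geodesic_between a b P1 /\ geodesic_between b c P2 /\ geodesic_between a c P3.

Definition out_ball_path (d : nat) (Q : dpath) (v : V) : Prop :=
  exists q, on_path q Q /\ dist_le q v d.
Definition in_ball_path (d : nat) (R : dpath) (v : V) : Prop :=
  exists r, on_path r R /\ dist_le v r d.

Definition thin_cond (d : nat) (P Q R : dpath) : Prop :=
  (pstart P = pstart Q \/ pstart P = pend Q) ->
  (pend P = pstart R \/ pend P = pend R) ->
  forall v, on_path v P -> out_ball_path d Q v \/ in_ball_path d R v.

(* all role assignments (P,Q,R) of the three sides *)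
Definition thin_triangle (d : nat) (P1 P2 P3 : dpath) : Prop :=
  thin_cond d P1 P2 P3 /\ thin_cond d P1 P3 P2 /\
  thin_cond d P2 P1 P3 /\ thin_cond d P2 P3 P1 /\
  thin_cond d P3 P1 P2 /\ thin_cond d P3 P2 P1.

Definition hyperbolic : Prop :=
  exists d : nat, forall a b c P1 P2 P3,
    geodesic_triangle a b c P1 P2 P3 -> thin_triangle d P1 P2 P3.

Definition rooted : Prop :=
  exists o : V, forall v, exists n, walk_len o v n.

Definition constant_out_degree : Prop :=
  exists k : nat, forall x, exists l : list V,
    NoDup l /\ length l = k /\ forall y, In y l <-> E x y.

Definition bounded_in_degree : Prop :=
  exists N : nat, forall y, exists l : list V,
    length l <= N /\ forall x, E x y -> In x l.

Definition self_embedding (g : V -> V) : Prop :=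
  (forall x y, g x = g y -> x = y) /\
  (forall x y, E x y <-> E (g x) (g y)).

(* g(F) = F for some nonempty finite F *)
Definition elliptic (g : V -> V) : Prop :=
  exists F : list V, F <> [] /\
    forall v, In v F <-> exists u, In u F /\ g u = v.

Definition automorphism (g : V -> V) : Prop :=
  self_embedding g /\ forall y, exists x, g x = y.

End Digraph.

(* Main.v *)
Require Import Defs.
From Stdlib Require Import List Arith Lia FinFun Classical.
Import ListNotations.

Lemma enum_sub {V : Type} (L : list V) : forall (S : V -> Prop),
  (forall x, S x -> In x L) -> exists l, NoDup l /\ forall x, In x l <-> S x.
Proof.
  induction L as [|a L IH]; intros S HS.
  - exists []. split; [constructor|]. intros x; split; [intros []|intros H; destruct (HS x H)].
  - destruct (IH (fun x => S x /\ x <> a)) as [l [Hl1 Hl2]].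
    { intros x [Hx Hne]. destruct (HS x Hx); [congruence|auto]. }
    destruct (classic (S a)) as [Ha|Ha].
    + exists (a :: l). split.
      * constructor; auto. intros Hin. apply Hl2 in Hin. tauto.
      * intros x; split.
        -- intros [<-|Hx]; auto. apply Hl2 in Hx; tauto.
        -- intros Hx. destruct (classic (x = a)) as [->|Hne]; [left; auto|right; apply Hl2; auto].
    + exists l. split; auto. intros x; split.
      * intros Hx; apply Hl2 in Hx; tauto.
      * intros Hx. apply Hl2. split; auto. intros ->; auto.
Qed.

Lemma pigeon {V : Type} (S : V -> Prop) (L : list V) (g : V -> V) :
  (forall x, S x -> In x L) -> (forall x y, g x = g y -> x = y) ->
  (forall x, S x -> S (g x)) -> forall y, S y -> exists x, S x /\ g x = y.
Proof.
  intros HL Hinj Hcl y Hy.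
  destruct (enum_sub L S HL) as [l [Hnd Hl]].
  assert (Hi : incl l (map g l)).
  { apply NoDup_length_incl.
    - apply Injective_map_NoDup; auto; intros a b; apply Hinj.
    - rewrite length_map; lia.
    - intros z Hz. apply in_map_iff in Hz. destruct Hz as [x [<- Hx]].
      apply Hl. apply Hcl. apply Hl; auto. }
  apply Hl in Hy. apply Hi in Hy. apply in_map_iff in Hy.
  destruct Hy as [x [Hx1 Hx2]]. exists x. split; auto. apply Hl; auto.
Qed.

Section S.
Context {V : Type} (E : V -> V -> Prop).

Lemma walk_shift v u m : walk_len E v u (S m) -> exists w, E v w /\ walk_len E w u m.
Proof.
  intros [f [Hw [H0 Hn]]]. exists (f 1). split.
  - rewrite <- H0. apply Hw. lia.
  - exists (fun i => f (S i)). split; [|split; auto].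
    intros i Hi. apply Hw. lia.
Qed.

Lemma walk_map g : (forall x y, E x y <-> E (g x) (g y)) ->
  forall x y n, walk_len E x y n -> walk_len E (g x) (g y) n.
Proof.
  intros Hg x y n [f [Hw [H0 Hn]]]. exists (fun i => g (f i)).
  split; [|split; congruence]. intros i Hi. apply (proj1 (Hg _ _)), Hw, Hi.
Qed.

Lemma in_lists : bounded_in_degree E -> forall L : list V,
  exists L', forall y x, In y L -> E x y -> In x L'.
Proof.
  intros [N HN] L. induction L as [|a L [L' IH]].
  - exists []. intros y x [].
  - destruct (HN a) as [la [_ Hla]]. exists (la ++ L').
    intros y x [<-|Hy] Hxy; apply in_or_app; [left; auto|right; eauto].
Qed.

Lemma ball_finite : bounded_in_degree E -> forall (F : list V) r,
  exists L, forall v u n, In u F -> n <= r -> walk_len E v u n -> In v L.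
Proof.
  intros Hb F r. induction r as [|r [L IH]].
  - exists F. intros v u n Hu Hn [f [_ [H0 H1]]].
    assert (n = 0) by lia. subst. congruence.
  - destruct (in_lists Hb L) as [L' HL']. exists (L ++ L').
    intros v u n Hu Hn Hw. destruct n as [|m].
    + apply in_or_app; left. apply (IH v u 0); [exact Hu|lia|exact Hw].
    + apply walk_shift in Hw. destruct Hw as [w [Hvw Hw]].
      apply in_or_app; right. eapply HL'; [|exact Hvw]. apply (IH w u m); [exact Hu|lia|exact Hw].
Qed.

End S.

Theorem corollary3p15 (V : Type) (E : V -> V -> Prop) :
  rooted E -> hyperbolic E -> constant_out_degree E -> bounded_in_degree E ->
  forall g : V -> V, self_embedding E g -> elliptic g -> automorphism E g.
Proof.
  intros [o Ho] _ [k Hk] Hb g [Hinj Hemb] [F [HF HFg]].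
  split; [split; auto|].
  assert (Hout : forall a y, E (g a) y -> exists x, g x = y).
  { intros a y Hy.
    destruct (Hk a) as [la [Hnd [Hlen Hla]]].
    destruct (Hk (g a)) as [lb [Hndb [Hlenb Hlb]]].
    assert (Hi : incl lb (map g la)).
    { apply NoDup_length_incl.
      - apply Injective_map_NoDup; auto; intros p q; apply Hinj.
      - rewrite length_map; lia.
      - intros z Hz. apply in_map_iff in Hz. destruct Hz as [x [<- Hx]].
        apply Hlb. apply (proj1 (Hemb _ _)). apply Hla; auto. }
    apply Hlb in Hy. apply Hi in Hy. apply in_map_iff in Hy.
    destruct Hy as [x [Hx _]]. eauto. }
  assert (Hprop : forall n x y, walk_len E x y n -> (exists a, g a = x) -> exists a, g a = y).
  { induction n as [|n IH]; intros x y Hw Hx.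
    - destruct Hw as [f [_ [H0 H1]]]. rewrite <- H1, H0; exact Hx.
    - apply walk_shift in Hw. destruct Hw as [w [Hxw Hw]].
      apply (IH w); auto. destruct Hx as [a <-]. eapply Hout; eauto. }
  destruct F as [|f F']; [congruence|].
  set (F := f :: F') in *.
  destruct (Ho f) as [r Hr].
  destruct (ball_finite E Hb F r) as [L HL].
  set (S := fun v => exists u n, In u F /\ n <= r /\ walk_len E v u n).
  assert (Ho' : exists a, g a = o).
  { destruct (pigeon S L g) with (y := o) as [x [_ Hx]]; eauto.
    - intros x [u [n [Hu [Hn Hw]]]]. eapply HL; eauto.
    - intros x [u [n [Hu [Hn Hw]]]]. exists (g u), n. split; [|split; auto].
      + apply HFg. eauto.
      + apply walk_map; auto.
    - exists f, r. split; [left; auto|split; auto]. }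
  intros y. destruct (Ho y) as [n Hn]. eapply Hprop; eauto.
Qed.
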